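(* Let $M=(X,(\leq_k)_{k=1,\dots,n})$ be a multichain with components $C_k=(X,\leq_k)$, let $L:=\prod_{k=1}^n C_k$, let $\delta:X\to L$ be the diagonal map $\delta(x)=(x,\dots,x)$, let $\Delta(L)$ be the join-subsemilattice of $L$ generated by $\delta(X)$, and let $\hat\Delta(L)$ be $\Delta(L)$ with a new least element added. Then the join-semilattice $K(C(M))$ of compact elements of $C(M)$ is isomorphic to $\hat\Delta(L)$ via a join-preserving map.
   Context: A multichain is a set $X$ with finitely many linear orders $\leq_1,\dots,\leq_n$. $C(M)$ is the closure system on $X$ whose closed sets are the sets $\bigcap_{k=1}^n I_k$ with $I_k$ an initial segment of $(X,\leq_k)$, ordered by inclusion; its compact elements are the closures of finite subsets of $X$. $L$ carries the componentwise order. *)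

(* Defs.v *)
From mathcomp Require Import all_boot.
From Stdlib Require Import List.
Set Implicit Arguments. Unset Strict Implicit. Unset Printing Implicit Defensive.

Section Multichain.
Variables (X : Type) (n : nat) (le : 'I_n -> X -> X -> Prop).

Definition linear_order (R : X -> X -> Prop) : Prop :=
  (forall x, R x x) /\ (forall x y, R x y -> R y x -> x = y) /\
  (forall x y z, R x y -> R y z -> R x z) /\ (forall x y, R x y \/ R y x).

Definition multichain : Prop := forall k, linear_order (le k).

Definition initial_segment (R : X -> X -> Prop) (I : X -> Prop) : Prop :=
  forall x y, I y -> R x y -> I x.

Definition closed_set (A : X -> Prop) : Prop :=
  exists I : 'I_n -> X -> Prop,
    (forall k, initial_segment (le k) (I k)) /\ (forall x, A x <-> forall k, I k x).

Definition closure (A : X -> Prop) : X -> Prop :=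
  fun x => forall B, closed_set B -> (forall y, A y -> B y) -> B x.

Definition compact (A : X -> Prop) : Prop :=
  exists s : list X, A = closure (fun y => In y s).

Definition KCM := {A : X -> Prop | compact A}.

Definition leK (A B : KCM) : Prop := forall x, proj1_sig A x -> proj1_sig B x.

Definition leL (a b : 'I_n -> X) : Prop := forall k, le k (a k) (b k).

Definition delta (x : X) : 'I_n -> X := fun _ => x.

Definition is_join (T : Type) (R : T -> T -> Prop) (a b c : T) : Prop :=
  R a c /\ R b c /\ (forall d, R a d -> R b d -> R c d).

Inductive in_Delta : ('I_n -> X) -> Prop :=
| Delta_gen x : in_Delta (delta x)
| Delta_join a b c : in_Delta a -> in_Delta b -> is_join leL a b c -> in_Delta c.

Definition DeltaL := {t : 'I_n -> X | in_Delta t}.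

Definition DeltaHat := option DeltaL.

Definition leDH (u v : DeltaHat) : Prop :=
  match u, v with
  | None, _ => True
  | Some _, None => False
  | Some a, Some b => leL (proj1_sig a) (proj1_sig b)
  end.

End Multichain.

(* Main.v *)
Require Import Defs.
From mathcomp Require Import all_boot.
From Stdlib Require List.
From Stdlib Require Import Classical FunctionalExtensionality PropExtensionality ClassicalEpsilon ProofIrrelevance.

Set Implicit Arguments. Unset Strict Implicit.
Section Aux.
Implicit Types (X : Type) (n : nat).

Lemma mc_trans X n (le : 'I_n -> X -> X -> Prop) (hM : multichain le) k x y z :
  le k x y -> le k y z -> le k x z.
Proof. by case: (hM k) => _ [_ [h _]]; apply: h. Qed.
Lemma mc_refl X n (le : 'I_n -> X -> X -> Prop) (hM : multichain le) k x : le k x x.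
Proof. by case: (hM k). Qed.
Lemma mc_anti X n (le : 'I_n -> X -> X -> Prop) (hM : multichain le) k x y :
  le k x y -> le k y x -> x = y.
Proof. by case: (hM k) => _ [h _]; apply: h. Qed.
Lemma mc_tot X n (le : 'I_n -> X -> X -> Prop) (hM : multichain le) k x y :
  le k x y \/ le k y x.
Proof. by case: (hM k) => _ [_ [_ h]]; apply: h. Qed.

Lemma join_coord X n (le : 'I_n -> X -> X -> Prop) (hM : multichain le) a b c :
  is_join (leL le) a b c -> forall k, c k = a k \/ c k = b k.
Proof.
move=> [hac [hbc hl]] k.
case: (mc_tot hM k (a k) (b k)) => h.
- right.
  pose d := fun j => if j == k then b k else c j.
  have : leL le c d.
    apply: hl => j; rewrite /d; case: eqP => [->|_] //; by first [exact: hac | exact: hbc | exact: mc_refl].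
  move=> /(_ k); rewrite /d eqxx => hck.
  exact: mc_anti hM _ _ _ hck (hbc k).
- left.
  pose d := fun j => if j == k then a k else c j.
  have : leL le c d.
    apply: hl => j; rewrite /d; case: eqP => [->|_] //; by first [exact: hac | exact: hbc | exact: mc_refl].
  move=> /(_ k); rewrite /d eqxx => hck.
  exact: mc_anti hM _ _ _ hck (hac k).
Qed.

Lemma join_exists X n (le : 'I_n -> X -> X -> Prop) (hM : multichain le) a b :
  exists c, is_join (leL le) a b c.
Proof.
exists (fun k => if excluded_middle_informative (le k (a k) (b k)) then b k else a k).
split; [|split].
- move=> k; case: excluded_middle_informative => h //; exact: mc_refl.
- move=> k; case: excluded_middle_informative => h; first exact: mc_refl.
  by case: (mc_tot hM k (a k) (b k)).
- move=> d had hbd k; by case: excluded_middle_informative.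
Qed.

Lemma Delta_witness X n (le : 'I_n -> X -> X -> Prop) (hM : multichain le) t :
  in_Delta le t -> forall k, exists x, leL le (delta x) t /\ le k (t k) x.
Proof.
elim=> [x|a b c ha iha hb ihb hj] k.
- by exists x; split => [j|]; exact: mc_refl.
- have [hac [hbc _]] := hj.
  case: (join_coord hM hj k) => ->.
  + have [x [h1 h2]] := iha k; exists x; split=> // j.
    exact: mc_trans (h1 j) (hac j).
  + have [x [h1 h2]] := ihb k; exists x; split=> // j.
    exact: mc_trans (h1 j) (hbc j).
Qed.

Lemma Delta_ne X n (le : 'I_n -> X -> X -> Prop) (hM : multichain le) (hn : 0 < n) t :
  in_Delta le t -> exists x, leL le (delta x) t.
Proof.
move=> ht; have [x [h _]] := Delta_witness hM ht (Ordinal hn); by exists x.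
Qed.

Lemma Delta_le X n (le : 'I_n -> X -> X -> Prop) (hM : multichain le) a b :
  in_Delta le a -> (forall x, leL le (delta x) a -> leL le (delta x) b) -> leL le a b.
Proof.
move=> ha h k; have [x [h1 h2]] := Delta_witness hM ha k.
exact: mc_trans h2 (h x h1 k).
Qed.

Definition tupmax X n (le : 'I_n -> X -> X -> Prop) (s : seq X) t :=
  (forall y, List.In y s -> leL le (delta y) t) /\
  (forall k, exists y, List.In y s /\ le k (t k) y).

Lemma Delta_list X n (le : 'I_n -> X -> X -> Prop) (hM : multichain le) t :
  in_Delta le t -> exists s, tupmax le s t.
Proof.
elim=> [x|a b c ha [sa [ha1 ha2]] hb [sb [hb1 hb2]] hj].
- exists [:: x]; split.
  + by move=> y [<-|[]] k; exact: mc_refl.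
  + by move=> k; exists x; split; [left|exact: mc_refl].
- have [hac [hbc _]] := hj.
  exists (sa ++ sb)%list; split.
  + move=> y hy k; case: (List.in_app_or _ _ _ hy) => h.
    * exact: mc_trans (ha1 y h k) (hac k).
    * exact: mc_trans (hb1 y h k) (hbc k).
  + move=> k; case: (join_coord hM hj k) => ->.
    * have [w [h1 h2]] := ha2 k; exists w; split; last done; apply: List.in_or_app; by left.
    * have [w [h1 h2]] := hb2 k; exists w; split; last done; apply: List.in_or_app; by right.
Qed.

Lemma list_Delta X n (le : 'I_n -> X -> X -> Prop) (hM : multichain le) (s : seq X) :
  s = [::] \/ exists t, in_Delta le t /\ tupmax le s t.
Proof.
elim: s => [|y s [->|[t [ht [h1 h2]]]]]; first by left.
- right; exists (delta y); split; first exact: Delta_gen.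
  split; first by move=> z [<-|[]] k; exact: mc_refl.
  by move=> k; exists y; split; [left|exact: mc_refl].
- right; have [c hj] := join_exists hM (delta y) t.
  have [hac [hbc _]] := hj.
  exists c; split; first exact: Delta_join (Delta_gen le y) ht hj.
  split.
  + move=> z [<-|hz] // k; exact: mc_trans (h1 z hz k) (hbc k).
  + move=> k; case: (join_coord hM hj k) => ->.
    * by exists y; split; [left|exact: mc_refl].
    * have [z [hz1 hz2]] := h2 k; exists z; split; last done; by right.
Qed.

Lemma closure_char X n (le : 'I_n -> X -> X -> Prop) (hM : multichain le) s t :
  tupmax le s t -> forall x, Defs.closure le (fun y => List.In y s) x <-> leL le (delta x) t.
Proof.
move=> [h1 h2] x; split.
- move=> hc; apply: (hc (fun x => leL le (delta x) t)) => //.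
  exists (fun k x => le k x (t k)); split=> // k z w hw hzw.
  exact: mc_trans hzw hw.
- move=> hx B [I [hI hB]] hs; apply/hB => k.
  have [y [hy1 hy2]] := h2 k.
  have : I k y by move: (hs y hy1) => /hB; apply.
  move=> hy; apply: (hI k x y hy); exact: mc_trans (hx k) hy2.
Qed.

Lemma closure_nil X n (le : 'I_n -> X -> X -> Prop) (hn : 0 < n) x :
  ~ Defs.closure le (fun y => List.In y [::]) x.
Proof.
move=> hc; have := hc (fun _ => False); apply=> //.
exists (fun _ _ => False); split; first by move=> k z w. by move=> z; split=> // /(_ (Ordinal hn)).
Qed.

Definition Rel X n (le : 'I_n -> X -> X -> Prop) (A : KCM le) (u : DeltaHat le) : Prop :=
  match u with
  | None => forall x, ~ proj1_sig A x
  | Some t => forall x, proj1_sig A x <-> leL le (delta x) (proj1_sig t)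
  end.

Lemma Rel_ex X n (le : 'I_n -> X -> X -> Prop) (hM : multichain le) (hn : 0 < n) (A : KCM le) :
  exists u, Rel A u.
Proof.
case: A => A hA; have [s hs] := hA.
case: (list_Delta hM s) => [e|[t [ht hm]]].
- exists None => x /=; rewrite hs e; exact: closure_nil.
- exists (Some (exist _ t ht)) => x /=; rewrite hs; exact: closure_char.
Qed.

Lemma Rel_le X n (le : 'I_n -> X -> X -> Prop) (hM : multichain le) (hn : 0 < n) (A B : KCM le) (u v : DeltaHat le) :
  Rel A u -> Rel B v -> (leK A B <-> leDH u v).
Proof.
case: u => [[a ha]|]; case: v => [[b hb]|] /= hA hB; rewrite /leK.
- split.
  + move=> h; apply: (Delta_le hM ha) => x hx; apply/hB; apply: h; by apply/hA.
  + move=> h x hx; apply/hB => k; exact: mc_trans ((proj1 (hA x) hx) k) (h k).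
- split=> // h; have [x hx] := Delta_ne hM hn ha.
  by case: (hB x); apply: h; apply/hA.
- by split=> // _ x /hA.
- by split=> // _ x /hA.
Qed.

Lemma KCM_ext X n (le : 'I_n -> X -> X -> Prop) (A B : KCM le) :
  leK A B -> leK B A -> A = B.
Proof.
case: A => A hA; case: B => B hB /= h1 h2.
have e : A = B.
  apply: functional_extensionality => x; apply: propositional_extensionality.
  by split; [apply: h1|apply: h2].
subst; f_equal; apply: proof_irrelevance.
Qed.

Lemma Rel_uniq X n (le : 'I_n -> X -> X -> Prop) (hM : multichain le) (hn : 0 < n) (A : KCM le) (u v : DeltaHat le) :
  Rel A u -> Rel A v -> u = v.
Proof.
move=> hu hv.
have h1 : leDH u v by apply/(Rel_le hM hn hu hv).
have h2 : leDH v u by apply/(Rel_le hM hn hv hu).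
case: u v hu hv h1 h2 => [[a ha]|] [[b hb]|] //= _ _ h1 h2.
have e : a = b.
  apply: functional_extensionality => k; exact: mc_anti hM _ _ _ (h1 k) (h2 k).
subst; do 2 f_equal; apply: proof_irrelevance.
Qed.

Lemma Rel_surj X n (le : 'I_n -> X -> X -> Prop) (hM : multichain le) (hn : 0 < n) (u : DeltaHat le) :
  exists A, Rel A u.
Proof.
case: u => [[t ht]|].
- have [s hs] := Delta_list hM ht.
  exists (exist _ (Defs.closure le (fun y => List.In y s)) (ex_intro _ s erefl)) => /=.
  exact: closure_char.
- exists (exist _ (Defs.closure le (fun y => List.In y [::])) (ex_intro _ [::] erefl)) => /= x.
  exact: closure_nil.
Qed.

End Aux.

Theorem theorem7p14 (X : Type) (n : nat) (le : 'I_n -> X -> X -> Prop) :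
  0 < n -> multichain le ->
  exists f : KCM le -> DeltaHat le,
    bijective f /\
    (forall A B, leK A B <-> leDH (f A) (f B)) /\
    (forall A B C, is_join (@leK _ _ le) A B C ->
                   is_join (@leDH _ _ le) (f A) (f B) (f C)).
Proof.
move=> hn hM.
pose f A := proj1_sig (constructive_indefinite_description _ (Rel_ex hM hn A)).
have hf A : Rel A (f A) := proj2_sig (constructive_indefinite_description _ (Rel_ex hM hn A)).
pose g u := proj1_sig (constructive_indefinite_description _ (Rel_surj hM hn u)).
have hg u : Rel (g u) u := proj2_sig (constructive_indefinite_description _ (Rel_surj hM hn u)).
have hord A B : leK A B <-> leDH (f A) (f B) := Rel_le hM hn (hf A) (hf B).
have gK : cancel g f by move=> u; exact: (Rel_uniq hM hn (hf (g u)) (hg u)).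
have fK : cancel f g.
  move=> A; apply: KCM_ext.
  - by apply/hord; rewrite gK; apply/hord => x.
  - by apply/hord; rewrite gK; apply/hord => x.
exists f; split; first by exists g.
split=> // A B C [h1 [h2 h3]]; split; [|split].
- exact/hord.
- exact/hord.
- move=> d; rewrite -(gK d) => /hord hA /hord hB; apply/hord; exact: h3.
Qed.
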